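(* Let $(u_k)_{k\ge1}$ be defined by $u_k=k$ for $k\in\{1,2,3\}$ and $u_k=2u_{k-2}$ for $k\ge4$. For $k\ge1$, let $\omega_k$ be the largest integer such that every 1-dimensional error pattern at level $k$ with at most $\omega_k$ edges is decoded correctly by the 1-dimensional renormalisation decoder. Then $\omega_k=u_k-1$ for all $k\ge1$.
   Context: 1-dimensional model. For $j\ge0$, the line at level $j$ is the cycle with vertex set $\mathbb{Z}/2^j\mathbb{Z}$ and edges $\epsilon_v=\{v,v+1\}$, $v\in\mathbb{Z}/2^j\mathbb{Z}$ (for $j=0$ it is a single vertex with one loop edge). A 1-dimensional error pattern at level $j$ is a subset of these edges; its weight is its number of edges; its syndrome is the set of vertices incident to an odd number of its edges (a loop counts twice). At level $j+1$, the blocks are the pairs consisting of the left edge $\{2m,2m+1\}$ and right edge $\{2m+1,2m+2\}$, $m\in\mathbb{Z}/2^j\mathbb{Z}$; block $m$ corresponds to edge $\{m,m+1\}$ at level $j$. One reduction stage applied to a pattern $\mathbf{f}$ at level $j+1$ with syndrome $S$: (a) for every block, if both endpoints $2m+1,2m+2$ of its right edge are in $S$, flip (add mod 2) the right edge and remove both vertices from $S$; (b) then, for every block, if its middle vertex $2m+1$ is still in $S$, flip its left edge. In the resulting pattern $\mathbf{f}'$ each block contains $0$ or $2$ edges; the image of $\mathbf{f}$ is the pattern at level $j$ containing edge $\{m,m+1\}$ iff block $m$ is contained in $\mathbf{f}'$. A pattern $\mathbf{f}$ at level $j+1$ is a (1-dimensional) preimage of a pattern $\mathbf{g}$ at level $j$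 if the image of $\mathbf{f}$ is $\mathbf{g}$. The 1-dimensional decoder applies $k$ successive reduction stages to a pattern at level $k$, ending with a pattern at level $0$ that is either empty or the loop edge; the original pattern is decoded correctly iff the final pattern is empty. (This is exactly the behaviour of the two-dimensional renormalisation decoder of the toric code on $\mathbb{Z}/2^k\times\mathbb{Z}/2^k$ restricted to errors supported on the horizontal line $\{(x,0)\}$, where being wrongly decoded means that error plus correction is that whole homologically non-trivial line.) *)

(* Defs.v *)
From mathcomp Require Import all_boot.
Set Implicit Arguments. Unset Strict Implicit. Unset Printing Implicit Defensive.

(* Level j: cycle with vertex set Z/2^j, represented as 'I_(2^j).
   Edge indexed by v : 'I_(2^j) is eps_v = {v, v+1}.
   A pattern is a set of edge indices. *)

Lemma pow2_gt0 (j : nat) : 0 < 2 ^ j.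
Proof. by rewrite expn_gt0. Qed.

Definition vtx (j n : nat) : 'I_(2 ^ j) := Ordinal (ltn_pmod n (pow2_gt0 j)).

Definition pattern (j : nat) := {set 'I_(2 ^ j)}.

(* number of edges of f incident to w, a loop counting twice:
   sum over edges v in f of the number of endpoints (v and v+1) equal to w *)
Definition incidence (j : nat) (f : pattern j) (w : 'I_(2 ^ j)) : nat :=
  \sum_(v in f) ((vtx j v == w) + (vtx j v.+1 == w)).

Definition syndrome (j : nat) (f : pattern j) : {set 'I_(2 ^ j)} :=
  [set w | odd (incidence f w)].

Definition flip (j : nat) (f E : pattern j) : pattern j :=
  [set e | (e \in f) (+) (e \in E)].

(* One reduction stage: pattern at level j+1 -> its image at level j.
   Block m (m : 'I_(2^j)) = left edge {2m,2m+1} (index 2m) and right edge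
   {2m+1,2m+2} (index 2m+1); middle vertex 2m+1. *)
Definition reduce (j : nat) (f : pattern j.+1) : pattern j :=
  let S := syndrome f in
  let A := [set m : 'I_(2 ^ j) |
             (vtx j.+1 (2 * m + 1) \in S) && (vtx j.+1 (2 * m + 2) \in S)] in
  let f1 := flip f [set vtx j.+1 (2 * m + 1) | m : 'I_(2 ^ j) in A] in
  let S1 := S :\: \bigcup_(m : 'I_(2 ^ j) | m \in A) [set vtx j.+1 (2 * m + 1); vtx j.+1 (2 * m + 2)] in
  let B := [set m : 'I_(2 ^ j) | vtx j.+1 (2 * m + 1) \in S1] in
  let f2 := flip f1 [set vtx j.+1 (2 * m) | m : 'I_(2 ^ j) in B] in
  [set m : 'I_(2 ^ j) | (vtx j.+1 (2 * m) \in f2) && (vtx j.+1 (2 * m + 1) \in f2)].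

Fixpoint decode (k : nat) : pattern k -> pattern 0 :=
  match k return pattern k -> pattern 0 with
  | 0 => fun f => f
  | k'.+1 => fun f => decode (reduce f)
  end.

Definition decoded_correctly (k : nat) (f : pattern k) : Prop := decode f = set0.

Definition corrects_upto (k w : nat) : Prop :=
  forall f : pattern k, #|f| <= w -> decoded_correctly f.

Definition is_largest (P : nat -> Prop) (w : nat) : Prop :=
  P w /\ forall w', P w' -> w' <= w.

(* u_1=1, u_2=2, u_3=3, u_k = 2 u_{k-2} for k >= 4 (u_0 unused) *)
Fixpoint u (k : nat) : nat :=
  match k with
  | 0 => 0
  | 1 => 1
  | 2 => 2
  | 3 => 3
  | k'.+2 => 2 * u k'
  end.

(* Main.v *)
Require Import Defs.
From mathcomp Require Import all_boot.
From mathcomp Require Import zify.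
Set Implicit Arguments. Unset Strict Implicit. Unset Printing Implicit Defensive.

Definition maj (a b c : bool) := [|| a && b, b && c | a && c].
Definition red (g : nat -> bool) (m : nat) := maj (g (2*m)) (g (2*m+1)) (g (2*m+2)).
Definition F (j : nat) (f : pattern j) : nat -> bool := fun i => vtx j i \in f.

Lemma vtx_ord j (v : 'I_(2^j)) : vtx j v = v.
Proof. apply: val_inj => /=; exact: modn_small. Qed.

Lemma vtx_val j n : val (vtx j n) = n %% 2^j.
Proof. by []. Qed.

Lemma sum_eq1 (T : finType) (A : {set T}) (c : T) :
  \sum_(v in A) (v == c : nat) = (c \in A).
Proof.
rewrite big_mkcond /= (bigD1 c) //= big1 ?addn0.
  by case: (c \in A); rewrite ?eqxx.
by move=> v /negPf ->; case: (v \in A).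
Qed.

Lemma keymod a b d : a < d -> a.+1 %% d = (b+1) %% d -> a = b %% d.
Proof.
move=> ad h; have : (a + 1 == b + 1 %[mod d]) by rewrite addn1 h.
by rewrite eqn_modDr (modn_small ad) => /eqP.
Qed.

Lemma incid j (f : pattern j) x :
  incidence f (vtx j (x + 1)) = (vtx j (x+1) \in f) + (vtx j x \in f).
Proof.
rewrite /incidence big_split /=; congr (_ + _).
  rewrite -sum_eq1; apply: eq_bigr => v _; by rewrite vtx_ord.
rewrite -sum_eq1; apply: eq_bigr => v _; congr (nat_of_bool _).
apply/eqP/eqP => [/(congr1 val) /= h | ->].
  apply: val_inj => /=; exact: (keymod (ltn_ord v) h).
by apply: val_inj => /=; rewrite -addn1 modnDml.
Qed.

Lemma vtx_par j x y : vtx j.+1 x = vtx j.+1 y -> odd x = odd y.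
Proof.
move=> /(congr1 val) /= h.
have o : odd (2 ^ j.+1) = false by rewrite oddX.
by rewrite -(odd_mod x o) -(odd_mod y o) h.
Qed.

Lemma vtx_inj1 j (m m' : 'I_(2^j)) c : c < 2 ->
  vtx j.+1 (2*m + c) = vtx j.+1 (2*m' + c) -> m = m'.
Proof.
move=> hc /(congr1 val) /=.
have hm := ltn_ord m; have hm' := ltn_ord m'.
have e : 2^j.+1 = 2 * 2^j by rewrite expnS.
rewrite !modn_small ?e; try lia.
move=> h; apply: val_inj => /=; lia.
Qed.

Lemma in_flip j (f E : pattern j) e : (e \in flip f E) = (e \in f) (+) (e \in E).
Proof. by rewrite inE. Qed.


Lemma img_same (j : nat) (S : {set 'I_(2^j)}) (m : 'I_(2^j)) c : c < 2 ->
  (vtx j.+1 (2*m + c) \in [set vtx j.+1 (2*m' + c) | m' : 'I_(2^j) in S]) = (m \in S).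
Proof.
move=> hc; apply/imsetP/idP => [[m' Hm' /(vtx_inj1 hc) ->] // | Hm].
by exists m.
Qed.

Lemma img_diff (j : nat) (S : {set 'I_(2^j)}) (m : 'I_(2^j)) c c' : odd c != odd c' ->
  (vtx j.+1 (2*m + c) \in [set vtx j.+1 (2*m' + c') | m' : 'I_(2^j) in S]) = false.
Proof.
move=> hc; apply/imsetP => [[m' _ /vtx_par]].
move: hc; rewrite !oddD; by case: (odd m); case: (odd m'); case: (odd c); case: (odd c').
Qed.

Lemma vtx_inj0 (j : nat) (m m' : 'I_(2^j)) : vtx j.+1 (2*m) = vtx j.+1 (2*m') -> m = m'.
Proof. move=> h; apply: (@vtx_inj1 _ m m' 0) => //; by rewrite !addn0. Qed.

Lemma par_contra (j : nat) x y : odd x != odd y -> vtx j.+1 x = vtx j.+1 y -> False.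
Proof. by move=> h /vtx_par e; rewrite e eqxx in h. Qed.

Lemma odd2 (m : nat) : odd (2 * m) = false.
Proof. by rewrite oddM. Qed.

Lemma oddDm (m c : nat) : odd (2 * m + c) = odd c.
Proof. by rewrite oddD odd2. Qed.

Lemma img_same0 (j : nat) (S : {set 'I_(2^j)}) (m : 'I_(2^j)) :
  (vtx j.+1 (2*m) \in [set vtx j.+1 (2*m') | m' : 'I_(2^j) in S]) = (m \in S).
Proof.
apply/imsetP/idP => [[m' Hm' /vtx_inj0 ->] // | Hm].
by exists m.
Qed.

Lemma img_eo (j : nat) (S : {set 'I_(2^j)}) (m : 'I_(2^j)) :
  (vtx j.+1 (2*m) \in [set vtx j.+1 (2*m' + 1) | m' : 'I_(2^j) in S]) = false.
Proof.
apply/imsetP => [[m' _]]; apply: par_contra.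
by rewrite ?odd2 ?oddDm.
Qed.

Lemma img_oe (j : nat) (S : {set 'I_(2^j)}) (m : 'I_(2^j)) :
  (vtx j.+1 (2*m+1) \in [set vtx j.+1 (2*m') | m' : 'I_(2^j) in S]) = false.
Proof.
apply/imsetP => [[m' _]]; apply: par_contra.
by rewrite ?odd2 ?oddDm.
Qed.

Lemma cup_mid (j : nat) (A : {set 'I_(2^j)}) (m : 'I_(2^j)) :
  (vtx j.+1 (2*m+1) \in \bigcup_(m1 in A) [set vtx j.+1 (2*m1+1); vtx j.+1 (2*m1+2)])
  = (m \in A).
Proof.
apply/bigcupP/idP => [[m1 Hm1]|Hm].
  rewrite !inE => /orP [/eqP /(@vtx_inj1 j m m1 1 isT) -> //| /eqP e].
  by exfalso; apply: par_contra e; rewrite !oddDm.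
by exists m => //; rewrite !inE eqxx.
Qed.

Lemma reduce_ord (j : nat) (f : pattern j.+1) (m : 'I_(2^j)) :
  (m \in reduce f) = maj (F f (2*m)) (F f (2*m+1)) (F f (2*m+2)).
Proof.
rewrite /reduce /= inE !in_flip.
have s1 : odd (incidence f (vtx j.+1 (2*m+1))) = F f (2*m+1) (+) F f (2*m).
  by rewrite incid oddD !oddb.
have s2 : odd (incidence f (vtx j.+1 (2*m+2))) = F f (2*m+2) (+) F f (2*m+1).
  have -> : 2*m+2 = (2*m+1)+1 by rewrite -addnA.
  by rewrite incid oddD !oddb.
rewrite img_eo img_oe img_same0 (@img_same _ _ _ 1) // !inE cup_mid !inE s1 s2 /F.
by case: (vtx j.+1 (2*m) \in f); case: (vtx j.+1 (2*m+1) \in f); case: (vtx j.+1 (2*m+2) \in f).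
Qed.


Lemma vtx_dbl j n c : vtx j.+1 (2 * (n %% 2^j) + c) = vtx j.+1 (2 * n + c).
Proof.
apply: val_inj => /=.
by rewrite muln_modr -expnS modnDml.
Qed.

Lemma reduce_nat j (f : pattern j.+1) n :
  F (reduce f) n = red (F f) n.
Proof.
rewrite /F reduce_ord /red /F /=.
have h0 := vtx_dbl j n 0; rewrite !addn0 in h0.
by rewrite !vtx_dbl h0.
Qed.

Fixpoint Rv (j : nat) (g : nat -> bool) (p : nat) : bool :=
  match j with
  | 0 => g p
  | j'.+1 => maj (Rv j' g (2*p)) (Rv j' g (2*p+1)) (Rv j' g (2*p+2))
  end.

Lemma maj_mono (a b c a' b' c' : bool) : (a -> a') -> (b -> b') -> (c -> c') ->
  maj a b c -> maj a' b' c'.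
Proof.
case: a; case: b; case: c; case: a'; case: b'; case: c' => //= h1 h2 h3;
  try (by move: (h1 isT)); try (by move: (h2 isT)); by move: (h3 isT).
Qed.

Lemma Rv_mono j (g h : nat -> bool) : (forall i, g i -> h i) -> forall p, Rv j g p -> Rv j h p.
Proof.
move=> gh; elim: j => [|j IH] p /=; first exact: gh.
by apply: maj_mono; apply: IH.
Qed.

Lemma Rv_ext j (g h : nat -> bool) : (forall i, g i = h i) -> forall p, Rv j g p = Rv j h p.
Proof.
move=> e p; apply/idP/idP; apply: Rv_mono => i; by rewrite e.
Qed.

Lemma Rv_shift j g s p : Rv j (fun i => g (i + s * 2^j)) p = Rv j g (p + s).
Proof.
elim: j s p => [|j IH] s p /=; first by rewrite muln1.
have e : s * 2 ^ j.+1 = (2 * s) * 2^j by rewrite expnS mulnCA mulnA.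
have E : forall q, Rv j (fun i => g (i + s * 2^j.+1)) q = Rv j g (q + 2*s).
  by move=> q; rewrite -IH; apply: Rv_ext => i; rewrite e.
rewrite !E.
have -> : 2 * p + 2 * s = 2 * (p + s) by rewrite mulnDr.
have -> : 2 * p + 1 + 2 * s = 2 * (p + s) + 1 by rewrite mulnDr; lia.
have -> : 2 * p + 2 + 2 * s = 2 * (p + s) + 2 by rewrite mulnDr; lia.
by [].
Qed.

Lemma Rv_red j g p : Rv j.+1 g p = Rv j (red g) p.
Proof.
elim: j p => [|j IH] p; first by [].
transitivity (maj (Rv j.+1 g (2*p)) (Rv j.+1 g (2*p+1)) (Rv j.+1 g (2*p+2))); first by [].
by rewrite !IH.
Qed.

Lemma decode_Rv k (f : pattern k) : (vtx 0 0 \in decode f) = Rv k (F f) 0.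
Proof.
elim: k f => [|k IH] f; first by [].
rewrite Rv_red -(@Rv_ext k (F (reduce f)) (red (F f)) (reduce_nat f) 0).
exact: IH (reduce f).
Qed.

Unset Implicit Arguments.


Lemma top_period k (f : pattern k.+1) : Rv k.+1 (F f) 0 = Rv k (F f) 0.
Proof.
transitivity (maj (Rv k (F f) (2*0)) (Rv k (F f) (2*0+1)) (Rv k (F f) (2*0+2))); first by [].
have -> : Rv k (F f) (2*0+2) = Rv k (F f) (2*0).
  rewrite muln0 -Rv_shift; apply: Rv_ext => i.
  rewrite /F; congr (_ \in f); apply: val_inj => /=.
  by rewrite -expnS modnDr.
by case: (Rv k (F f) (2*0)); case: (Rv k (F f) (2*0+1)).
Qed.

Definition cnt (g : nat -> bool) a b := \sum_(a <= i < b) (g i : nat).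

Lemma cnt_expand g a n : cnt g a (a + n) = \sum_(i < n) g (a + i).
Proof.
rewrite /cnt -{1}[a]add0n big_addn addKn big_mkord; apply: eq_bigr => i _.
by rewrite addnC.
Qed.

Lemma cnt_cat g a b c : a <= b -> b <= c -> cnt g a c = cnt g a b + cnt g b c.
Proof. move=> ab bc; by rewrite /cnt (big_cat_nat ab bc). Qed.

Lemma cnt_le g a a' b' b : a <= a' -> b' <= b -> cnt g a' b' <= cnt g a b.
Proof.
move=> h1 h2; case: (leqP a' b') => h3.
  rewrite (cnt_cat g _ _ _ h1 (leq_trans h3 h2)) (cnt_cat g _ _ _ h3 h2).
  by rewrite addnCA leq_addr.
rewrite /cnt big_geq //.
exact: ltnW.
Qed.

Lemma cnt_two g a b a1 b1 a2 b2 : a <= a1 -> a1 <= b1 -> b1 <= a2 -> a2 <= b2 -> b2 <= b ->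
  cnt g a1 b1 + cnt g a2 b2 <= cnt g a b.
Proof.
move=> h1 h2 h3 h4 h5.
have hb1 : b1 <= b by apply: leq_trans h5; apply: leq_trans h4.
apply: leq_trans (cnt_le g _ _ _ _ h1 (leqnn b)).
rewrite (cnt_cat g _ _ _ h2 hb1) leq_add2l.
exact: cnt_le.
Qed.

Lemma Rv2 j g p : Rv j.+2 g p =
  maj (maj (Rv j g (4*p+0)) (Rv j g (4*p+1)) (Rv j g (4*p+2)))
      (maj (Rv j g (4*p+2)) (Rv j g (4*p+3)) (Rv j g (4*p+4)))
      (maj (Rv j g (4*p+4)) (Rv j g (4*p+5)) (Rv j g (4*p+6))).
Proof.
rewrite /=.
have -> : 2*(2*p)+1 = 4*p+1 by lia.
have -> : 2*(2*p)+2 = 4*p+2 by lia.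
have -> : 2*(2*p) = 4*p+0 by lia.
have -> : 2*(2*p+1)+1 = 4*p+3 by lia.
have -> : 2*(2*p+1)+2 = 4*p+4 by lia.
have -> : 2*(2*p+1) = 4*p+2 by lia.
have -> : 2*(2*p+2)+1 = 4*p+5 by lia.
have -> : 2*(2*p+2)+2 = 4*p+6 by lia.
have -> : 2*(2*p+2) = 4*p+4 by lia.
by [].
Qed.

Ltac pick := first [ by exists 0, 2 | by exists 0, 3 | by exists 0, 4 | by exists 0, 5
 | by exists 0, 6 | by exists 1, 3 | by exists 1, 4 | by exists 1, 5 | by exists 1, 6
 | by exists 2, 4 | by exists 2, 5 | by exists 2, 6 | by exists 3, 5 | by exists 3, 6
 | by exists 4, 6 ].

Lemma pair7 (a : nat -> bool) :
  maj (maj (a 0) (a 1) (a 2)) (maj (a 2) (a 3) (a 4)) (maj (a 4) (a 5) (a 6)) ->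
  exists i i', [/\ i + 2 <= i', i' <= 6, a i & a i'].
Proof.
case h0: (a 0); case h1: (a 1); case h2: (a 2); case h3: (a 3);
case h4: (a 4); case h5: (a 5); case h6: (a 6) => //= _; pick.
Qed.

Lemma cnt1 g a : cnt g a (a + 1) = g a.
Proof. by rewrite cnt_expand big_ord_recr big_ord0 /= addn0. Qed.

Lemma cnt3 g a : cnt g a (a + 3) = g (a+0) + g (a+1) + g (a+2).
Proof. by rewrite cnt_expand !big_ord_recr big_ord0 /=. Qed.

Lemma cnt7 g a : cnt g a (a + 7) =
  g (a+0) + g (a+1) + g (a+2) + g (a+3) + g (a+4) + g (a+5) + g (a+6).
Proof. by rewrite cnt_expand !big_ord_recr big_ord0 /=. Qed.

Lemma u_step j : u j.+4 = 2 * u j.+2.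
Proof. by []. Qed.

Lemma LB j : forall g p, Rv j g p -> u j.+1 <= cnt g (p * 2^j) (p * 2^j + 2^j.+1 - 1).
Proof.
elim/ltn_ind: j => j IH.
case: j IH => [|[|[|j']]] IH g p H.
- rewrite expn0 muln1 (_ : p + 2^1 - 1 = p + 1); last by rewrite expn1; lia.
  by rewrite cnt1; move: H => /= ->.
- rewrite (_ : p * 2^1 = 2 * p + 0); last by rewrite expn1; lia.
  rewrite (_ : 2 * p + 0 + 2^2 - 1 = (2 * p + 0) + 3); last by rewrite !expnS expn0; lia.
  rewrite cnt3 !addn0; move: H => /=.
  by case: (g (2*p)); case: (g (2*p+1)); case: (g (2*p+2)).
- rewrite (_ : p * 2^2 = 4 * p); last by rewrite !expnS expn0; lia.
  rewrite (_ : 4 * p + 2^3 - 1 = 4 * p + 7); last by rewrite !expnS expn0; lia.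
  rewrite cnt7; move: H; rewrite Rv2 /=.
  move: (g (4*p+0)) (g (4*p+1)) (g (4*p+2)) (g (4*p+3)) (g (4*p+4)) (g (4*p+5)) (g (4*p+6)).
  by move=> [] [] [] [] [] [] [].
- set i := j'.+1.
  have [k [k' [h1 h2 hk hk']]] := pair7 (fun q => Rv i g (4*p + q)) (eq_ind _ _ H _ (Rv2 i g p)).
  have IHk := IH i (ltnW (ltnSn _)) g _ hk.
  have IHk' := IH i (ltnW (ltnSn _)) g _ hk'.
  rewrite u_step mul2n -addnn.
  apply: leq_trans (leq_add IHk IHk') _.
  have U0 : 0 < 2^j' by rewrite expn_gt0.
  have e1 : 2^i.+1 = 2 * 2^i by rewrite expnS.
  have e2 : 2^i.+2 = 4 * 2^i by rewrite !expnS; lia.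
  have e3 : 2^i.+3 = 8 * 2^i by rewrite !expnS; lia.
  have Ui : 0 < 2^i by rewrite expn_gt0.
  rewrite e1 e2 e3.
  move: Ui; set U := 2^i => Ui.
  apply: cnt_two; nia.
Qed.

Definition memb (L : seq nat) : nat -> bool := fun i => i \in L.

Definition Mid j (B A : seq nat) : nat -> bool :=
  fun i => (i + 2^j \in B) || (2^j <= i) && (i - 2^j \in A).

Definition Inv j (A B : seq nat) :=
  [/\ Rv j (memb A) 0, Rv j (memb B) 0 & Rv j (Mid j B A) 0].

Definition step j (AB : seq nat * seq nat) :=
  (map (addn (2^j)) AB.2 ++ map (addn (3*2^j)) AB.1,
   map (addn (3*2^j)) AB.2 ++ map (addn (5*2^j)) AB.1).

Fixpoint fam j : seq nat * seq nat :=
  match j with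
  | 0 => ([:: 0], [:: 0])
  | 1 => ([:: 0; 2], [:: 0; 2])
  | 2 => ([:: 0; 2; 4], [:: 2; 4; 6])
  | j'.+2 => step j' (fam j')
  end.

Lemma win j (g h : nat -> bool) q : (forall x, g x -> h (x + q * 2^j)) ->
  Rv j g 0 -> Rv j h q.
Proof.
move=> gh H; rewrite -[q]add0n -Rv_shift.
exact: (Rv_mono gh H).
Qed.

Lemma mem_shE (L : seq nat) s x y : x \in L -> y = x + s -> y \in map (addn s) L.
Proof. by move=> hx ->; rewrite addnC; apply: map_f. Qed.

Lemma m123 (a0 a1 a2 a3 a4 a5 a6 : bool) : a1 -> a2 -> a3 ->
  maj (maj a0 a1 a2) (maj a2 a3 a4) (maj a4 a5 a6).
Proof. by move: a0 a1 a2 a3 a4 a5 a6 => [] [] [] [] [] [] []. Qed.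

Lemma m345 (a0 a1 a2 a3 a4 a5 a6 : bool) : a3 -> a4 -> a5 ->
  maj (maj a0 a1 a2) (maj a2 a3 a4) (maj a4 a5 a6).
Proof. by move: a0 a1 a2 a3 a4 a5 a6 => [] [] [] [] [] [] []. Qed.

Lemma m0156 (a0 a1 a2 a3 a4 a5 a6 : bool) : a0 -> a1 -> a5 -> a6 ->
  maj (maj a0 a1 a2) (maj a2 a3 a4) (maj a4 a5 a6).
Proof. by move: a0 a1 a2 a3 a4 a5 a6 => [] [] [] [] [] [] []. Qed.

Lemma Inv_step j A B : Inv j A B -> Inv j.+2 (step j (A, B)).1 (step j (A, B)).2.
Proof.
case=> hA hB hM.
have U0 : 0 < 2^j by rewrite expn_gt0.
have e4 : 2^j.+2 = 4 * 2^j by rewrite !expnS; lia.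
rewrite /step /=.
set A' := map (addn (2^j)) B ++ map (addn (3*2^j)) A.
set B' := map (addn (3*2^j)) B ++ map (addn (5*2^j)) A.
have midA : forall x, Mid j B A x -> x + 2 * 2^j \in A'.
  move=> x; rewrite /Mid => /orP [hx | /andP [hle hx]]; rewrite mem_cat; apply/orP.
    by left; apply: (mem_shE _ _ _ _ hx); lia.
  by right; apply: (mem_shE _ _ _ _ hx); lia.
have midB : forall x, Mid j B A x -> x + 4 * 2^j \in B'.
  move=> x; rewrite /Mid => /orP [hx | /andP [hle hx]]; rewrite mem_cat; apply/orP.
    by left; apply: (mem_shE _ _ _ _ hx); lia.
  by right; apply: (mem_shE _ _ _ _ hx); lia.
split; rewrite Rv2 muln0 !add0n.
- apply: m123.
  + apply: (win _ _ _ _ _ hB) => x hx; rewrite /memb mem_cat; apply/orP; left.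
    by apply: (mem_shE _ _ _ _ hx); lia.
  + exact: (win _ _ _ _ midA hM).
  + apply: (win _ _ _ _ _ hA) => x hx; rewrite /memb mem_cat; apply/orP; right.
    by apply: (mem_shE _ _ _ _ hx); lia.
- apply: m345.
  + apply: (win _ _ _ _ _ hB) => x hx; rewrite /memb mem_cat; apply/orP; left.
    by apply: (mem_shE _ _ _ _ hx); lia.
  + exact: (win _ _ _ _ midB hM).
  + apply: (win _ _ _ _ _ hA) => x hx; rewrite /memb mem_cat; apply/orP; right.
    by apply: (mem_shE _ _ _ _ hx); lia.
- apply: m0156.
  + apply: (win _ _ _ _ _ hM) => x hx; rewrite /Mid e4 mul0n addn0; apply/orP; left.
    exact: midB x hx.
  + apply: (win _ _ _ _ _ hA) => x hx; rewrite /Mid e4; apply/orP; left.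
    rewrite mem_cat; apply/orP; right; apply: (mem_shE _ _ _ _ hx); lia.
  + apply: (win _ _ _ _ _ hB) => x hx; rewrite /Mid e4; apply/orP; right.
    apply/andP; split; first lia.
    rewrite mem_cat; apply/orP; left; apply: (mem_shE _ _ _ _ hx); lia.
  + apply: (win _ _ _ _ _ hM) => x hx; rewrite /Mid e4; apply/orP; right.
    apply/andP; split; first lia.
    have := midA x hx.
    by rewrite (_ : x + 6 * 2^j - 4 * 2^j = x + 2 * 2^j) //; lia.
Qed.

Lemma fam_ok j : 0 < j ->
  [/\ Inv j (fam j).1 (fam j).2, size (fam j).1 = u j.+1 & size (fam j).2 = u j.+1].
Proof.
elim/ltn_ind: j => j IH.
case: j IH => [|[|[|j']]] IH // _.
all: try by split => //; split; vm_compute.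
- have [hI h1 h2] := IH j'.+1 (ltnW (ltnSn _)) isT.
  have -> : fam j'.+3 = step j'.+1 (fam j'.+1) by [].
  case: (fam j'.+1) hI h1 h2 => A B /= hI h1 h2.
  split.
  + exact: (Inv_step _ _ _ hI).
  + rewrite size_cat !size_map h1 h2; lia.
  + rewrite size_cat !size_map h1 h2; lia.
Qed.

Lemma witness j : exists W : seq nat, Rv j (memb W) 0 /\ size W = u j.+1.
Proof.
case: j => [|j]; first by exists [:: 0].
have [[hA _ _] hs _] := fam_ok j.+1 isT.
by exists (fam j.+1).1.
Qed.

Lemma u_pos k : 0 < k -> 0 < u k.
Proof.
elim/ltn_ind: k => k IH.
case: k IH => [|[|[|[|k']]]] IH // _.
by rewrite u_step muln_gt0 (IH k'.+2).
Qed.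

Lemma card_F k (f : pattern k) : cnt (F f) 0 (2^k) = #|f|.
Proof.
rewrite /cnt big_mkord -sum1_card [RHS]big_mkcond /=; apply: eq_bigr => i _.
by rewrite /F vtx_ord; case: (i \in f).
Qed.

Lemma dec0 (S : {set 'I_(2^0)}) : vtx 0 0 \notin S -> S = set0.
Proof.
move=> h; apply/setP => x; rewrite inE.
have -> : x = vtx 0 0.
  apply: val_inj => /=; rewrite mod0n; have := ltn_ord x; move: (nat_of_ord x) => n; rewrite expn0; lia.
exact: negbTE h.
Qed.

Theorem proposition4 (k : nat) :
  1 <= k -> is_largest (corrects_upto k) (u k - 1).
Proof.
case: k => [|j] // _.
have up := u_pos j.+1 isT.
split.
- move=> f hf; rewrite /decoded_correctly; apply: dec0; apply/negP => H.
  rewrite decode_Rv top_period in H.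
  have := LB j (F f) 0 H; rewrite mul0n add0n => h.
  have := leq_trans h (cnt_le (F f) 0 0 _ (2^j.+1) (leqnn 0) (leq_subr 1 _)).
  rewrite card_F => h2.
  have := leq_trans h2 hf; lia.
- move=> w' hw'; rewrite leqNgt; apply/negP => hlt.
  have [W [hW hs]] := witness j.
  pose f : pattern j.+1 := [set x in map (vtx j.+1) W].
  have cf : #|f| <= w'.
    rewrite cardsE; apply: leq_trans (card_size _) _; rewrite size_map hs; lia.
  have := hw' f cf; rewrite /decoded_correctly => E.
  have : vtx 0 0 \in decode f.
    rewrite decode_Rv top_period; move: hW; apply: Rv_mono => x hx.
    by rewrite /F inE; apply: map_f.
  by rewrite E inE.
Qed.
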